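(* In the standing setting below, let $x'\in\mathbb{X}$, $y_0,y_1\in\mathbb{Y}$ with $y_0\ne y_1$, $f_i(x)=-c(x,y_i)+c(x',y_i)$ for $i=0,1$, and $S=\{x\in\mathbb{X}: f_0(x)\le f_1(x)\}$. Then the interior of $S$ is contained in $\{x\in\mathbb{X}: f_0(x)<f_1(x)\}$, and the boundary $\partial S$ contains $\{x\in\mathbb{X}: f_0(x)=f_1(x)\}$.
   Context: Standing setting: $\mathbb{X},\mathbb{Y}\subset\mathbb{R}^n$ are compact with non-empty interior; $c:\mathbb{X}\times\mathbb{Y}\to\mathbb{R}$ has continuous $D_xc$, $D_yc$, and continuous mixed second derivatives with $D^2_{xy}c=(D^2_{yx}c)^T$; for each $x$ the map $y\mapsto -D_xc(x,y)$ is injective on $\mathbb{Y}$ and for each $y$ the map $x\mapsto -D_yc(x,y)$ is injective on $\mathbb{X}$; $D^2_{xy}c(x,y)$ is invertible everywhere; for every $y$ the set $\{-D_yc(x,y):x\in\mathbb{X}\}$ is convex and for every $x$ the set $\{-D_xc(x,y):y\in\mathbb{Y}\}$ is convex. Interior and boundary are taken in $\mathbb{R}^n$. *)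

(* Defs.v *)
From HB Require Import structures.
From mathcomp Require Import all_boot all_order all_algebra.
From mathcomp Require Import all_classical all_reals all_analysis.
Set Implicit Arguments. Unset Strict Implicit. Unset Printing Implicit Defensive.
Import Order.TTheory GRing.Theory Num.Theory.
Import numFieldNormedType.Exports.
Local Open Scope classical_set_scope.
Local Open Scope ring_scope.

Section Defs.
Variables (R : realType) (n : nat).
Local Notation V := 'rV[R]_n.

Definition ev (i : 'I_n) : V := delta_mx 0 i.

Definition boundary (A : set V) : set V := closure A `\` interior A.

Definition Dxc (c : V -> V -> R) (x y : V) : V :=
  \row_(i < n) 'D_(ev i) (fun z => c z y) x.
Definition Dyc (c : V -> V -> R) (x y : V) : V :=
  \row_(i < n) 'D_(ev i) (fun w => c x w) y.

(* D^2_{xy} c : (i,j) entry = d/dy_j d/dx_i c ;  D^2_{yx} c : (i,j) = d/dx_j d/dy_i c *)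
Definition Dxyc (c : V -> V -> R) (x y : V) : 'M[R]_n :=
  \matrix_(i < n, j < n) 'D_(ev j) (fun w => 'D_(ev i) (fun z => c z w) x) y.
Definition Dyxc (c : V -> V -> R) (x y : V) : 'M[R]_n :=
  \matrix_(i < n, j < n) 'D_(ev j) (fun z => 'D_(ev i) (fun w => c z w) y) x.

Definition XY (X Y : set V) : set (V * V) := [set p | X p.1 /\ Y p.2].

(* The standing setting of the paper.  c is given as a function on
   R^n x R^n; only its behaviour on X x Y is constrained. *)
Definition standing_setting (X Y : set V) (c : V -> V -> R) : Prop :=
  compact X /\ compact Y /\ interior X !=set0 /\ interior Y !=set0 /\
   (forall x y, X x -> Y y -> differentiable (fun z => c z y) x) /\
   (forall x y, X x -> Y y -> differentiable (fun w => c x w) y) /\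
   {within XY X Y, continuous (fun p => Dxc c p.1 p.2)} /\
   {within XY X Y, continuous (fun p => Dyc c p.1 p.2)} /\
   (forall x y i, X x -> Y y ->
       differentiable (fun w => 'D_(ev i) (fun z => c z w) x) y) /\
   (forall x y i, X x -> Y y ->
       differentiable (fun z => 'D_(ev i) (fun w => c z w) y) x) /\
   {within XY X Y, continuous (fun p => Dxyc c p.1 p.2)} /\
   {within XY X Y, continuous (fun p => Dyxc c p.1 p.2)} /\
   (forall x y, X x -> Y y -> Dxyc c x y = (Dyxc c x y)^T) /\
   (forall x, X x -> {in Y &, injective (fun y => - Dxc c x y)}) /\
   (forall y, Y y -> {in X &, injective (fun x => - Dyc c x y)}) /\
   (forall x y, X x -> Y y -> Dxyc c x y \in unitmx) /\
   (forall y, Y y -> convex_set (M := V) [set - Dyc c x y | x in X]) /\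
   (forall x, X x -> convex_set (M := V) [set - Dxc c x y | y in Y]).

End Defs.

(* Main.v *)
Require Import Defs.
From HB Require Import structures.
From mathcomp Require Import all_boot all_order all_algebra.
From mathcomp Require Import all_classical all_reals all_analysis.
Import Order.TTheory GRing.Theory Num.Theory.
Import numFieldNormedType.Exports.
Local Open Scope classical_set_scope.
Local Open Scope ring_scope.
From mathcomp Require Import lra.
Lemma D_locmin (R : realType) (V : normedModType R) (f : V -> R) x v :
  derivable f x v -> (\forall h \near (0:R), f x <= f (h *: v + x)) -> 'D_v f x = 0.
Proof.
move=> df /nbhs_ballP [r /= r0 He].
pose q := fun h : R => h^-1 *: (f (h *: v + x) - f x).
have dq : q @ 0^' --> 'D_v f x by exact: df.
have dql : q @ 0^'- --> 'D_v f x.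
  apply: cvg_trans dq; apply: cvg_app.
  move=> A [e egt0 Ae]; exists e => // y ye ylt0; apply: Ae => //.
  exact/ltr0_neq0.
have dqr : q @ 0^'+ --> 'D_v f x.
  apply: cvg_trans dq; apply: cvg_app.
  move=> A [e egt0 Ae]; exists e => // y ye ylt0; apply: Ae => //.
  exact/lt0r_neq0.
apply/eqP; rewrite eq_le; apply/andP; split.
  apply: (cvgr_to_le dql); near=> h; rewrite /q.
  apply: mulr_le0_ge0.
    by rewrite invr_le0; apply: ltW; near: h; exists 1 => /=.
  rewrite subr_ge0; apply: He; near: h; exists r => // y ye _; exact: ye.
apply: (cvgr_to_ge dqr); near=> h; rewrite /q.
apply: mulr_ge0.
  by rewrite invr_ge0; apply: ltW; near: h; exists 1 => /=.
rewrite subr_ge0; apply: He; near: h; exists r => // y ye _; exact: ye.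
Unshelve. all: by end_near. Qed.
Lemma foo (R : realType) n (v x : 'rV[R]_n) : continuous (fun h : R => h *: v + x).
Proof.
move=> h; apply: cvgD; last exact: cvg_cst.
apply: cvgZl. exact: cvg_id.
Qed.

Theorem corollary2p20 (R : realType) (n : nat) (X Y : set 'rV[R]_n)
    (c : 'rV[R]_n -> 'rV[R]_n -> R)
    (Hset : standing_setting X Y c)
    (x' y0 y1 : 'rV[R]_n) (Hx' : X x') (Hy0 : Y y0) (Hy1 : Y y1)
    (Hy01 : y0 <> y1) :
  let f0 := fun x => - c x y0 + c x' y0 in
  let f1 := fun x => - c x y1 + c x' y1 in
  let S := [set x | X x /\ f0 x <= f1 x] in
  interior S `<=` [set x | X x /\ f0 x < f1 x] /\
  [set x | X x /\ f0 x = f1 x] `<=` boundary S.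
Proof.
move=> f0 f1 S.
case: Hset => _ [_ [_ [_ [Hdx [_ [_ [_ [_ [_ [_ [_ [_ [Htw _]]]]]]]]]]]]].
have H1 : interior S `<=` [set x | X x /\ f0 x < f1 x].
  move=> x Sx.
  have [Xx le01] : S x by exact: interior_subset.
  split => //; rewrite lt_neqAle le01 andbT; apply/eqP => eq01.
  apply: Hy01; apply: (Htw x Xx); rewrite ?inE //.
  congr (- _); apply/rowP => i; rewrite !mxE.
  pose g := fun z => c z y0 - c z y1.
  have d0 : derivable (fun z => c z y0) x (@ev R n i) by apply: diff_derivable; exact: Hdx.
  have d1 : derivable (fun z => c z y1) x (@ev R n i) by apply: diff_derivable; exact: Hdx.
  have dg : derivable g x (@ev R n i) by exact: derivableB.
  have : 'D_(@ev R n i) g x = 0.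
    apply: D_locmin => //.
    have cx : (fun h : R => h *: @ev R n i + x) @ 0 --> x.
      by have := @foo R n (@ev R n i) x 0; rewrite /continuous_at /= scale0r add0r.
    apply: (@filterS _ _ _ (fun h : R => S (h *: @ev R n i + x))); last exact: (cx _ Sx).
    move=> h [_].
    rewrite /f0 /f1 /g => Hh; move: eq01; rewrite /f0 /f1 => e; lra.
  rewrite /g deriveB // => /eqP; rewrite subr_eq0 => /eqP; exact.
split => // x [Xx e01]; split.
  by apply: subset_closure; split => //; rewrite e01.
move=> /H1 [_]; rewrite e01 ltxx //.
Qed.
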